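(* Let $p$ be prime, let $c_1,\dots,c_k$ be positive integers, and let $v\ge2$ be an integer coprime to $p$. There exist a collection of $v$-adic intervals $\{I_\ell\}_{\ell\ge1}$ in $[0,1)$ and positive integers $\alpha_\ell$ such that: (1) for each $i\in\{1,\dots,k\}$, letting $J^i_\ell$ be the smallest $pc_i$-adic interval containing $I_\ell$, the intervals $\{J^i_\ell\}_{\ell\ge1}$ are pairwise disjoint and contained in $[0,1)$; in particular the $I_\ell$ are pairwise disjoint; (2) for each $\alpha\in\mathbb{N}$ there are only finitely many $\ell$ with $\alpha_\ell=\alpha$; (3) for each $\ell\ge1$ and each $i$, there is a point $\zeta(J^i_\ell)$ which is an interior endpoint of some $pc_i$-adic child of $J^i_\ell$ such that $$0<\zeta(J^i_\ell)-Z(I_\ell)\le v^{-100\alpha_\ell}|I_\ell|.$$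
   Context: For a positive integer $N$, the $N$-adic intervals are $[\frac{k-1}{N^s},\frac{k}{N^s})$, $s,k\in\mathbb{Z}$, with $N$-adic children the $N$ equal-length subintervals $[\frac{k-1}{N^s}+\frac{j-1}{N^{s+1}},\frac{k-1}{N^s}+\frac{j}{N^{s+1}})$, $1\le j\le N$. For a $v$-adic interval $I=[\frac{k-1}{v^s},\frac{k}{v^s})$, $Z(I)=\frac{k-1}{v^s}+\frac{v-1}{v^{s+1}}$ is the left endpoint of its last $v$-adic child. An interior endpoint of a child of $J$ is an endpoint of that child lying in the interior of $J$. $|I|$ is the length of $I$. *)

(* Defs.v *)
(* Intervals [a,b) with rational endpoints, represented by
   their endpoint pair (a, b). All N-adic intervals have rational endpoints. *)
From mathcomp Require Import all_boot all_order all_algebra.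
Set Implicit Arguments. Unset Strict Implicit. Unset Printing Implicit Defensive.
Import Order.TTheory GRing.Theory Num.Theory.
Local Open Scope ring_scope.

Definition itv := (rat * rat)%type.

Definition mem_itv (I : itv) (x : rat) : Prop := I.1 <= x /\ x < I.2.

Definition sub_itv (I J : itv) : Prop := forall x, mem_itv I x -> mem_itv J x.

Definition disj_itv (I J : itv) : Prop := forall x, ~ (mem_itv I x /\ mem_itv J x).

Definition len (I : itv) : rat := I.2 - I.1.

Definition is_adic (N : nat) (I : itv) : Prop :=
  exists (s k : int),
    I.1 = (k - 1)%:~R / (N%:R ^ s) /\ I.2 = k%:~R / (N%:R ^ s).

Definition child (N : nat) (J : itv) (j : nat) : itv :=
  (J.1 + (j.-1)%:R / N%:R * len J, J.1 + j%:R / N%:R * len J).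

Definition interior_child_endpoint (N : nat) (J : itv) (x : rat) : Prop :=
  exists j : nat, (1 <= j <= N)%N /\
    (x = (child N J j).1 \/ x = (child N J j).2) /\ J.1 < x /\ x < J.2.

Definition smallest_adic (N : nat) (I J : itv) : Prop :=
  is_adic N J /\ sub_itv I J /\
  forall J', is_adic N J' -> sub_itv I J' -> sub_itv J J'.

(* Z(I): left endpoint of the last v-adic child of the v-adic interval I,
   i.e. (k-1)/v^s + (v-1)/v^(s+1) = I.1 + (v-1)/v * |I| *)
Definition Zpt (v : nat) (I : itv) : rat := I.1 + (v.-1)%:R / v%:R * len I.

Definition unit_itv : itv := (0, 1).

(* Main.v *)
Require Import Defs.
From mathcomp Require Import all_boot all_order all_algebra.
From mathcomp Require Import cyclic.
From mathcomp Require Import ring lra zify.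

Lemma exT (P N L j : nat) : 1 < P -> P %| N ^ L -> coprime P j ->
  exists T, [&& P %| N ^ T.+1, ~~ (P %| j * N ^ T) & T < L].
Proof.
move=> P1 PN cPj.
have ex : exists t, P %| N ^ t by exists L.
case: (ex_minnP ex) => t Pt tmin.
have t0 : 0 < t.
  rewrite lt0n; apply/eqP => e; move: Pt; rewrite e expn0 dvdn1; lia.
exists t.-1; rewrite prednK // Pt /= Gauss_dvdr //.
apply/andP; split.
  by apply/negP => h; have := tmin _ h; lia.
by have := tmin _ PN; lia.
Qed.

Lemma euler_pow (v P m : nat) : coprime v P -> 1 < P ->
  P * (v ^ (totient P * m) %/ P) + 1 = v ^ (totient P * m).
Proof.
move=> cvP P1.
have h : v ^ (totient P * m) %% P = 1.
  by rewrite expnM -modnXm Euler_exp_totient // modnXm exp1n modn_small.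
by rewrite {2}(divn_eq (v ^ (totient P * m)) P) h mulnC.
Qed.

Lemma mod1_pow (p v L : nat) : coprime p v -> 1 < v ->
  (p ^ (totient v * L)) %% v = 1.
Proof.
move=> cpv v1.
by rewrite expnM -modnXm Euler_exp_totient // modnXm exp1n modn_small.
Qed.

Lemma kdiv (v P K j : nat) (t : nat) : 1 < v -> P %% v = 1 -> j %% v = 1 ->
  P * K + 1 = v ^ t.+1 -> v * ((j * K + 1) %/ v) = j * K + 1.
Proof.
move=> v1 Pv jv hK.
have h : (j * K + 1) %% v = 0.
  rewrite -modnDml -modnMml jv mul1n modnDml.
  have : (P * K + 1) %% v = 0 by rewrite hK expnS modnMr.
  by rewrite -modnDml -modnMml Pv mul1n modnDml.
by rewrite mulnC divnK // /dvdn h.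
Qed.

Import Order.TTheory GRing.Theory Num.Theory.
Local Open Scope ring_scope.

Lemma natz_rat (n : nat) : ((n%:Z)%:~R : rat) = n%:R.
Proof. by []. Qed.

Lemma powz_nat (N T : nat) : (N%:R : rat) ^ (T%:Z) = N%:R ^+ T.
Proof. by rewrite -exprnP. Qed.

Lemma helperab (X a b : rat) : a != 0 -> b != 0 -> X / (a * b) * a = X / b.
Proof. by move=> ha hb; field; apply/andP. Qed.

Lemma minimalA (N T u W : nat) (I : itv) (x : rat) :
  (1 < N)%N -> I.1 < x -> x < I.2 -> x * N%:R ^+ T.+1 = W%:R ->
  u%:R / N%:R ^+ T <= x -> x < u.+1%:R / N%:R ^+ T ->
  forall J', is_adic N J' -> sub_itv I J' ->
  sub_itv (u%:R / N%:R ^+ T, u.+1%:R / N%:R ^+ T) J'.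
Proof.
move=> N1 h1 h2 hW hu1 hu2 J' [s' [k' [E1 E2]]] HIJ z [/= hz1 hz2].
have Npos : (0 : rat) < N%:R by rewrite ltr0n; lia.
have N0 : (N%:R : rat) != 0 by rewrite gt_eqF.
have [/= HJ1 _] := HIJ I.1 (conj (lexx _) (lt_trans h1 h2)).
have [_ /= HJ2] := HIJ x (conj (ltW h1) h2).
rewrite E1 in HJ1; rewrite E2 in HJ2.
have spos : 0 < (N%:R : rat) ^ s' by rewrite exprz_gt0.
have Tpos : 0 < (N%:R : rat) ^+ T by rewrite exprn_gt0.
case: (lerP (T.+1)%:Z s') => Hs.
- exfalso.
  have [d Hd] : exists d : nat, s' = (T.+1 + d)%N%:Z.
    exists (`|s' - T.+1%:Z|%N); rewrite PoszD gez0_abs; [ring|lia].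
  rewrite Hd powz_nat exprD in HJ1 HJ2 spos.
  have e : x * (N%:R ^+ T.+1 * N%:R ^+ d) = (W * N ^ d)%:R.
    by rewrite mulrA hW natrM natrX.
  move: HJ1; rewrite ler_pdivrMr // => HJ1.
  have H1 : (k' - 1)%:~R < ((W * N ^ d)%:Z)%:~R :> rat.
    rewrite natz_rat -e; apply: (le_lt_trans HJ1).
    by rewrite ltr_pM2r.
  move: HJ2; rewrite ltr_pdivlMr // e -natz_rat => H2.
  rewrite ltr_int in H1; rewrite ltr_int in H2; move: H1 H2; clear; lia.
- have [d Hd] : exists d : nat, T%:Z = s' + d%:Z.
    exists (`|T%:Z - s'|%N); rewrite gez0_abs; [ring|lia].
  have eT : (N%:R : rat) ^+ T = N%:R ^ s' * N%:R ^+ d.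
    by rewrite -(powz_nat N T) Hd expfzDr // powz_nat.
  have dpos : 0 < (N%:R : rat) ^+ d by rewrite exprn_gt0.
  have H1 : (k' - 1)%:~R * N%:R ^+ d < u.+1%:R :> rat.
    have := le_lt_trans HJ1 (lt_le_trans h1 (ltW hu2)).
    by rewrite eT ltr_pdivlMr ?mulr_gt0 // mulrA divfK ?gt_eqF.
  have H2 : u%:R < k'%:~R * N%:R ^+ d :> rat.
    have := le_lt_trans hu1 HJ2.
    by rewrite eT ltr_pdivrMr ?mulr_gt0 // mulrA divfK ?gt_eqF.
  have c1 : ((k' - 1) * (N ^ d)%:Z <= u%:Z)%R.
    have : ((k' - 1) * (N ^ d)%:Z)%:~R < (u.+1%:Z)%:~R :> rat.
      by rewrite intrM !natz_rat natrX.
    rewrite ltr_int; generalize ((k' - 1) * (N ^ d)%:Z) => Y; clear; lia.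
  have c2 : (u.+1%:Z <= k' * (N ^ d)%:Z)%R.
    have : (u%:Z)%:~R < (k' * (N ^ d)%:Z)%:~R :> rat.
      by rewrite intrM !natz_rat natrX.
    rewrite ltr_int; generalize (k' * (N ^ d)%:Z) => Y; clear; lia.
  rewrite /mem_itv E1 E2; split.
  + apply: le_trans hz1.
    rewrite eT ler_pdivrMr // (helperab _ _ _ (lt0r_neq0 spos) (lt0r_neq0 dpos)).
    rewrite ler_pdivlMr //.
    have : ((k' - 1) * (N ^ d)%:Z)%:~R <= (u%:Z)%:~R :> rat by rewrite ler_int.
    by rewrite intrM !natz_rat natrX.
  + apply: lt_le_trans hz2 _.
    rewrite eT ler_pdivlMr // (helperab _ _ _ (lt0r_neq0 spos) (lt0r_neq0 dpos)).
    rewrite ler_pdivrMr //.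
    have : (u.+1%:Z)%:~R <= (k' * (N ^ d)%:Z)%:~R :> rat by rewrite ler_int.
    by rewrite intrM !natz_rat natrX.
Qed.

Lemma pieceJ (N T P j u : nat) (x : rat) (I : itv) :
  (1 < N)%N -> (0 < P)%N -> (P %| N ^ T.+1)%N -> ~~ (P %| j * N ^ T)%N ->
  x = j%:R / P%:R -> u = ((j * N ^ T) %/ P)%N ->
  I.1 < x -> x < I.2 -> len I <= ((P * N ^ T)%N%:R)^-1 ->
  smallest_adic N I (u%:R / N%:R ^+ T, u.+1%:R / N%:R ^+ T) /\
  interior_child_endpoint N (u%:R / N%:R ^+ T, u.+1%:R / N%:R ^+ T) x /\
  x - N%:R / P%:R <= u%:R / N%:R ^+ T /\ u.+1%:R / N%:R ^+ T <= x + N%:R / P%:R.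
Proof.
move=> N1 P0 PdN PnjN hx hu h1 h2 hlen.
set rem := ((j * N ^ T) %% P)%N.
have hdiv : (j * N ^ T = u * P + rem)%N by rewrite hu /rem -divn_eq.
have rem0 : (0 < rem)%N by rewrite lt0n; move: PnjN; rewrite /dvdn.
have remP : (rem < P)%N by rewrite /rem ltn_pmod.
have PleN : (P <= N ^ T.+1)%N by apply: dvdn_leq => //; rewrite expn_gt0; lia.
have NremP : (P %| N * rem)%N.
  have e : (N * (j * N ^ T) = P * (N * u) + N * rem)%N by rewrite hdiv; ring.
  have : (P %| N * (j * N ^ T))%N by rewrite mulnCA expnS in PdN *; apply: dvdn_mull.
  by rewrite e dvdn_addr // dvdn_mulr.
set jj := ((N * rem) %/ P)%N.
have hjj : (jj * P = N * rem)%N by rewrite /jj divnK.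
have jj1 : (1 <= jj <= N)%N.
  apply/andP; split; first by rewrite lt0n; apply/eqP => e; move: hjj; rewrite e; lia.
  have : (jj * P < N * P)%N by rewrite hjj ltn_pmul2l //; lia.
  rewrite ltn_pmul2r //; lia.
set d := (N%:R : rat) ^+ T.
have dpos : 0 < d by rewrite exprn_gt0 // ltr0n; lia.
set e := ((P * N ^ T)%N%:R : rat)^-1.
have epos : 0 < e by rewrite invr_gt0 ltr0n muln_gt0 P0 expn_gt0; lia.
have Ppos : (0 : rat) < P%:R by rewrite ltr0n.
have Npos : (0 : rat) < N%:R by rewrite ltr0n; lia.
have eE : e = (P%:R * d)^-1 by rewrite /e natrM natrX.
have xE : x = ((u * P)%N%:R + rem%:R) * e.
  rewrite hx eE (_ : (u * P)%N%:R + rem%:R = (j * N ^ T)%N%:R :> rat); last by rewrite hdiv natrD.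
  rewrite natrM natrX -/d; field.
  by apply/andP; split; rewrite lt0r_neq0.
have J1E : u%:R / d = (u * P)%N%:R * e.
  rewrite eE natrM; field; by apply/andP; split; rewrite lt0r_neq0.
have J2E : u.+1%:R / d = ((u * P)%N%:R + P%:R) * e.
  rewrite eE natrM -addn1 natrD; field; by apply/andP; split; rewrite lt0r_neq0.
have R1 : (1 : rat) <= rem%:R by rewrite ler1n.
have R2 : (rem%:R + 1 : rat) <= P%:R by rewrite natr1 ler_nat.
have NP : P%:R * e <= N%:R / P%:R.
  rewrite eE ler_pdivlMr // invfM mulrA divff ?lt0r_neq0 // mul1r.
  by rewrite mulrC ler_pdivrMr // /d -natrX -natrM -expnS ler_nat.
have Pe : P%:R * e = d^-1 by rewrite eE invfM mulrA divff ?lt0r_neq0 // mul1r.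
split; last split; last split.
- split; [|split].
  + exists (T%:Z), (u.+1%:Z); rewrite /= powz_nat; split => //.
    by congr (_ / _); rewrite -addn1 PoszD addrK.
  + move=> z [hz1 hz2]; rewrite /mem_itv /= /len in hlen *.
    have hRe : 0 <= (rem%:R - 1) * e by apply: mulr_ge0; [lra | exact: ltW].
    have hPe : 0 <= (P%:R - rem%:R - 1) * e by apply: mulr_ge0; [lra | exact: ltW].
    rewrite J1E J2E; rewrite xE in h1 h2; rewrite -/e in hlen; split; nra.
  + apply: (@minimalA N T u (j * (N ^ T.+1 %/ P))%N I x) => //.
    * have E : (N%:R : rat) ^+ T.+1 = (N ^ T.+1 %/ P)%:R * P%:R by rewrite -natrM divnK // natrX.
      rewrite hx E (natrM rat j); field; by rewrite lt0r_neq0.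
    * rewrite J1E xE; nra.
    * rewrite J2E xE; nra.
- exists jj; split => //; rewrite /child /len /=.
  split; last by rewrite J1E J2E xE; split; nra.
  right; rewrite xE J1E J2E.
  have : (jj%:R : rat) * P%:R = N%:R * rem%:R by rewrite -!natrM hjj.
  move=> h.
  have hq : jj%:R / N%:R = rem%:R / P%:R :> rat.
    by apply/eqP; rewrite eqr_div ?lt0r_neq0 // h mulrC.
  rewrite hq; field; by rewrite lt0r_neq0.
- have hPe : 0 <= (P%:R - rem%:R) * e by apply: mulr_ge0; [lra | exact: ltW].
  rewrite J1E xE; nra.
- have hRe : 0 <= rem%:R * e by apply: mulr_ge0; [lra | exact: ltW].
  rewrite J2E xE; nra.
Qed.

Lemma pieceI (v s k P j K A : nat) (x : rat) :
  (1 < v)%N -> (0 < j < P)%N -> (P * K + 1 = v ^ s.+1)%N -> (v * k = j * K + 1)%N ->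
  (j * v ^ A <= v * P)%N ->
  x = j%:R / P%:R ->
  let I := (((k%:Z - 1)%:~R / v%:R ^ (s%:Z)), (k%:Z)%:~R / v%:R ^ (s%:Z)) : itv in
  is_adic v I /\ I.1 < x /\ x < I.2 /\ len I = (v%:R ^+ s)^-1 /\
  0 < x - Zpt v I /\ x - Zpt v I <= v%:R ^- A * len I.
Proof.
move=> v1 /andP[j0 jP] hK hk hA hx I.
have Vpos : (0:rat) < v%:R ^+ s by rewrite exprn_gt0 // ltr0n; lia.
have vpos : (0:rat) < v%:R by rewrite ltr0n; lia.
have Ppos : (0:rat) < P%:R by rewrite ltr0n; lia.
have jpos : (0:rat) < j%:R by rewrite ltr0n.
have e1 : I.1 = (k%:R - 1) / v%:R ^+ s by rewrite /= powz_nat intrB.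
have e2 : I.2 = k%:R / v%:R ^+ s by rewrite /= powz_nat.
have hKr : P%:R * K%:R + 1 = v%:R * v%:R ^+ s :> rat.
  by rewrite -natrM natr1 -natrX -natrM -expnS -hK addn1.
have hkr : v%:R * k%:R = j%:R * K%:R + 1 :> rat.
  by rewrite -!natrM natr1 hk addn1.
have hZ : Zpt v I = j%:R * K%:R / (v%:R * v%:R ^+ s).
  rewrite /Zpt /len e1 e2 -subn1 natrB; last lia.
  rewrite (_ : j%:R * K%:R = v%:R * k%:R - 1); last lra.
  field; apply/andP; split; exact: lt0r_neq0.
have hxZ : x - Zpt v I = j%:R / (P%:R * (v%:R * v%:R ^+ s)).
  have hv : v%:R * v%:R ^+ s != 0 :> rat by rewrite lt0r_neq0 // mulr_gt0.
  have hKe : K%:R = (v%:R * v%:R ^+ s - 1) / P%:R :> rat.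
    by rewrite -hKr addrK [P%:R * _]mulrC mulfK // lt0r_neq0.
  by rewrite hZ hx hKe; field; rewrite !lt0r_neq0.
have Zge : I.1 <= Zpt v I.
  rewrite /Zpt lerDl /len; apply: mulr_ge0.
    by apply: divr_ge0 => //; exact: ler0n.
  rewrite e1 e2 -mulrBl subKr; exact: ltW (divr_gt0 _ Vpos).
have hpos : 0 < x - Zpt v I by rewrite hxZ divr_gt0 // !mulr_gt0.
split; [|split; [|split; [|split; [|split]]]].
- by exists (s%:Z), (k%:Z).
- lra.
- have : Zpt v I + (v%:R * v%:R ^+ s)^-1 = I.2.
    rewrite hZ e2 (_ : j%:R * K%:R = v%:R * k%:R - 1); last lra.
    by field; rewrite !lt0r_neq0.
  have : x - Zpt v I < (v%:R * v%:R ^+ s)^-1.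
    rewrite hxZ ltr_pdivrMr ?mulr_gt0 // (_ : _^-1 * _ = P%:R) ?ltr_nat //.
    by field; rewrite !lt0r_neq0.
  lra.
- rewrite /len e1 e2; field; exact: lt0r_neq0.
- exact: hpos.
- rewrite hxZ /len e1 e2 -mulrBl subKr mul1r.
  have vApos : (0:rat) < v%:R ^+ A by rewrite exprn_gt0.
  rewrite ler_pdivrMr ?mulr_gt0 // (_ : v%:R ^- A / v%:R ^+ s * (P%:R * (v%:R * v%:R ^+ s)) = (v%:R * P%:R) / v%:R ^+ A); last first.
    by field; rewrite !lt0r_neq0.
  by rewrite ler_pdivlMr // -!natrX -!natrM ler_nat.
Qed.

Theorem theorem2p5 (p k : nat) (c : 'I_k -> nat) (v : nat) :
  prime p -> (forall i, (0 < c i)%N) -> (2 <= v)%N -> coprime v p ->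
  exists (I : nat -> itv) (alpha : nat -> nat) (J : 'I_k -> nat -> itv),
    (forall l, is_adic v (I l) /\ sub_itv (I l) unit_itv) /\
    (forall l, (0 < alpha l)%N) /\
    (forall i l, smallest_adic (p * c i) (I l) (J i l)) /\
    (forall i l l', l <> l' -> disj_itv (J i l) (J i l')) /\
    (forall i l, sub_itv (J i l) unit_itv) /\
    (forall l l', l <> l' -> disj_itv (I l) (I l')) /\
    (forall a : nat, exists n : nat, forall l, alpha l = a -> (l < n)%N) /\
    (forall i l, exists zeta : rat,
        interior_child_endpoint (p * c i) (J i l) zeta /\
        0 < zeta - Zpt v (I l) /\
        zeta - Zpt v (I l) <= v%:R ^- (100 * alpha l) * len (I l)).
Proof.
move=> pr cpos v2 cop.
have p1 : (1 < p)%N := prime_gt1 pr.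
pose Q := (\prod_(i < k) (p * c i))%N.
have Q0 : (0 < Q)%N by apply: prodn_gt0 => i; rewrite muln_gt0 cpos andbT; lia.
have NQ : forall i, (p * c i %| Q)%N by move=> i; rewrite /Q (bigD1 i) //= dvdn_mulr.
have NleQ : forall i, (p * c i <= Q)%N by move=> i; apply: dvdn_leq.
have N1 : forall i, (1 < p * c i)%N by move=> i; have := cpos i; nia.
pose j := (1 + v * p * Q)%N.
have jv : (j %% v = 1)%N.
  by rewrite /j addnC -mulnA mulnC modnMDl modn_small.
have jp : coprime p j.
  by rewrite coprime_sym -coprime_modl /j addnC mulnAC modnMDl modn_small // coprime1n.
have j4 : (4 * Q <= j)%N.
  have h : (4 <= v * p)%N by rewrite (_ : 4 = 2 * 2)%N // leq_mul.
  by rewrite /j; have := leq_mul h (leqnn Q); lia.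
have tv : (0 < totient v)%N by rewrite totient_gt0; lia.
pose n l := (j * v ^ (100 * l.+1))%N.
pose L l := (totient v * n l)%N.
pose P l := (p ^ L l)%N.
pose m l := (P l * Q ^ L l + 1)%N.
pose s l := (totient (P l) * m l).-1.
pose K l := (v ^ (s l).+1 %/ P l)%N.
pose kk l := ((j * K l + 1) %/ v)%N.
pose x l := (j%:R / (P l)%:R : rat).
pose I l := (((kk l)%:Z - 1)%:~R / v%:R ^ ((s l)%:Z),
             ((kk l)%:Z)%:~R / v%:R ^ ((s l)%:Z)) : itv.
pose alpha l := l.+1.
have hn1 : forall l, (j <= n l)%N.
  by move=> l; rewrite /n leq_pmulr // expn_gt0; lia.
have hnP : forall l, (n l < P l)%N.
  move=> l; apply: (leq_trans (ltn_expl (n l) (isT : 1 < 2)%N)).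
  apply: (@leq_trans (2 ^ L l)); first by rewrite leq_exp2l // /L leq_pmull.
  by rewrite leq_exp2r // /L muln_gt0 tv /n muln_gt0 expn_gt0; lia.
have hjP : forall l, (2 * j < P l)%N.
  move=> l; apply: leq_ltn_trans (hnP l); rewrite /n [(2 * j)%N]mulnC leq_mul2l.
  apply/orP; right; apply: (@leq_trans v) => //; rewrite -{1}(expn1 v) leq_exp2l //; lia.
have hL0 : forall l, (0 < L l)%N by move=> l; rewrite /L muln_gt0 tv /n muln_gt0 expn_gt0; lia.
have hPmono : forall l l', (l < l')%N -> (2 * P l <= P l')%N.
  move=> l l' hl; rewrite /P.
  have : (L l < L l')%N.
    rewrite /L ltn_pmul2l // /n ltn_pmul2l; last lia.
    by rewrite ltn_exp2l; lia.
  move=> hL; apply: (@leq_trans (p ^ (L l).+1)); first by rewrite expnS leq_mul2r; lia.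
  by rewrite leq_exp2l.
have hsP : forall l, (P l * Q ^ L l < v ^ s l)%N.
  move=> l; apply: leq_trans (ltn_expl _ v2); rewrite /s.
  have : (0 < totient (P l))%N by rewrite totient_gt0 /P expn_gt0; lia.
  rewrite /m; nia.
have hPK : forall l, (P l * K l + 1 = v ^ (s l).+1)%N.
  move=> l; rewrite /K /s prednK; last first.
    by rewrite muln_gt0 totient_gt0 /P expn_gt0 /m addn1 /=; lia.
  apply: euler_pow; last by have := hjP l; lia.
  by rewrite /P coprimeXr.
have hk : forall l, (v * kk l = j * K l + 1)%N.
  move=> l; apply: (@kdiv v (P l) (K l) j (s l)) => //.
  by rewrite /P /L mod1_pow // coprime_sym.
have hI : forall l, is_adic v (I l) /\ (I l).1 < x l /\ x l < (I l).2 /\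
    len (I l) = (v%:R ^+ s l)^-1 /\ 0 < x l - Zpt v (I l) /\
    x l - Zpt v (I l) <= v%:R ^- (100 * alpha l) * len (I l).
  move=> l; apply: (@pieceI v (s l) (kk l) (P l) j (K l) (100 * alpha l)) => //.
  - by have := hjP l; rewrite /j => h; apply/andP; split; lia.
  - have := hnP l; rewrite /n /alpha => h; apply: leq_trans (ltnW h) _.
    by rewrite leq_pmull; lia.
have hT : forall (i : 'I_k) l, exists T,
    [&& (P l %| (p * c i) ^ T.+1)%N, ~~ (P l %| j * (p * c i) ^ T)%N & (T < L l)%N].
  move=> i l; apply: exT.
  - by have := hjP l; lia.
  - by rewrite expnMn dvdn_mulr.
  - by rewrite /P coprimeXl.
pose T i l := xchoose (hT i l).
have HT : forall i l, [&& (P l %| (p * c i) ^ (T i l).+1)%N,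
    ~~ (P l %| j * (p * c i) ^ (T i l))%N & (T i l < L l)%N].
  by move=> i l; apply: (xchooseP (hT i l)).
pose u i l := ((j * (p * c i) ^ T i l) %/ P l)%N.
pose J i l := ((u i l)%:R / (p * c i)%:R ^+ T i l,
               (u i l).+1%:R / (p * c i)%:R ^+ T i l) : itv.
have hJ : forall i l, smallest_adic (p * c i) (I l) (J i l) /\
    interior_child_endpoint (p * c i) (J i l) (x l) /\
    x l - (p * c i)%:R / (P l)%:R <= (J i l).1 /\
    (J i l).2 <= x l + (p * c i)%:R / (P l)%:R.
  move=> i l; have /and3P [h1 h2 h3] := HT i l.
  have [_ [hI1 [hI2 [hlen _]]]] := hI l.
  apply: (@pieceJ (p * c i) (T i l) (P l) j (u i l) (x l) (I l)) => //.
  - by rewrite /P expn_gt0; lia.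
  - have hN : (0 < p * c i)%N by have := N1 i; lia.
    rewrite hlen lef_pV2; first last.
    + by rewrite posrE ltr0n muln_gt0 expn_gt0 hN /P expn_gt0; lia.
    + by rewrite posrE exprn_gt0 // ltr0n; lia.
    rewrite -natrX ler_nat; apply: leq_trans (ltnW (hsP l)).
    rewrite leq_mul2l; apply/orP; right.
    apply: (@leq_trans ((p * c i) ^ L l)).
      by apply: leq_pexp2l => //; exact: ltnW.
    by rewrite leq_exp2r.
have Ppos : forall l, (0 : rat) < (P l)%:R by move=> l; rewrite ltr0n /P expn_gt0; lia.
have jpos : (0 : rat) < j%:R by rewrite ltr0n /j; lia.
have xP : forall l, x l * (P l)%:R = j%:R by move=> l; rewrite /x divfK // lt0r_neq0.
have xpos : forall l, 0 < x l by move=> l; rewrite /x divr_gt0.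
have x2 : forall l, 2 * x l < 1.
  move=> l; have := hjP l; rewrite -(ltr_nat rat) natrM => h.
  have := xP l; have := Ppos l; nra.
have hxl : forall l l', (l < l')%N -> 2 * x l' <= x l.
  move=> l l' hl; have := hPmono l l' hl; rewrite -(ler_nat rat) natrM => h.
  have h1 := xP l; have h2 := xP l'; have := Ppos l; have := Ppos l'.
  have := xpos l'; have := xpos l.
  have h3 : 0 <= x l' * ((P l')%:R - 2 * (P l)%:R).
    by apply: mulr_ge0; [exact: ltW | lra].
  nra.
have hl4 : forall l, 4 * len (I l) <= x l.
  move=> l; have [_ [_ [_ [hlen _]]]] := hI l.
  have Vpos : (0 : rat) < v%:R ^+ s l by rewrite exprn_gt0 // ltr0n; lia.
  rewrite hlen /x ler_pdivrMr // mulrAC ler_pdivlMr //.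
  rewrite -natrX -!natrM ler_nat; apply: leq_mul.
    by have := Q0; lia.
  have h1 := hsP l.
  have h2 : (P l <= P l * Q ^ L l)%N by rewrite leq_pmulr // expn_gt0 Q0.
  lia.
have hN4 : forall (i : 'I_k) l, 4 * ((p * c i)%:R / (P l)%:R) <= x l.
  move=> i l; rewrite /x mulrA ler_pM2r ?invr_gt0 // -natrM ler_nat.
  by have := NleQ i; lia.
have hreg : forall l z, (mem_itv (I l) z \/ exists i, mem_itv (J i l) z) ->
    3 * x l <= 4 * z /\ 4 * z < 5 * x l.
  move=> l z [[hz1 hz2] | [i [hz1 hz2]]].
  - have [_ [h1 [h2 _]]] := hI l; have := hl4 l; rewrite /len; lra.
  - have [_ [_ [h1 h2]]] := hJ i l; have := hN4 i l; lra.
have hdisj : forall l l' z, l <> l' ->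
    (mem_itv (I l) z \/ exists i, mem_itv (J i l) z) ->
    (mem_itv (I l') z \/ exists i, mem_itv (J i l') z) -> False.
  move=> l l' z hne H1 H2.
  have [a1 a2] := hreg _ _ H1; have [b1 b2] := hreg _ _ H2.
  have := xpos l; have := xpos l'.
  case: (ltngtP l l') => hl.
  - have := hxl _ _ hl; lra.
  - have := hxl _ _ hl; lra.
  - by move=> _ _; apply: hne.
have hunit : forall l z, (mem_itv (I l) z \/ exists i, mem_itv (J i l) z) ->
    mem_itv unit_itv z.
  move=> l z H; have [a1 a2] := hreg _ _ H; have := xpos l; have := x2 l.
  rewrite /mem_itv /=; lra.
exists I, alpha, J; split; [|split; [|split; [|split; [|split; [|split; [|split]]]]]].
- move=> l; split; first by have [] := hI l.
  by move=> z hz; apply: (hunit l); left.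
- by [].
- by move=> i l; have [] := hJ i l.
- move=> i l l' hne z [h1 h2]; apply: (hdisj l l' z hne); right; exists i => //.
- by move=> i l z hz; apply: (hunit l); right; exists i.
- move=> l l' hne z [h1 h2]; apply: (hdisj l l' z hne); left => //.
- by move=> a; exists a => l <-.
- move=> i l; exists (x l); split; first by have [_ []] := hJ i l.
  by have [_ [_ [_ [_ []]]]] := hI l.
Qed.
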